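(* Fix $I_{12},I_{23},I_{31}\in[0,\infty)$. For $(u_1,u_2,u_3)\in\mathcal{U}_E^{123}$, let $\alpha_1,\alpha_2,\alpha_3$ be the inner angles, opposite to sides $l_1,l_2,l_3$ respectively, of the Euclidean triangle with side lengths $l_1,l_2,l_3$. Then at every point of $\mathcal{U}_E^{123}$, the Jacobian matrix $\left(\partial\alpha_i/\partial u_j\right)_{i,j=1}^3$ has: - a zero eigenvalue with eigenvector $(1,1,1)$, and - two negative eigenvalues. In particular, it is negative semi-definite with kernel spanned by $(1,1,1)$.
   Context: Put $r_i=e^{u_i}$ for $i=1,2,3$, and $$l_1^2=r_2^2+r_3^2+2I_{23}r_2r_3,\quad l_2^2=r_3^2+r_1^2+2I_{31}r_3r_1,\quad l_3^2=r_1^2+r_2^2+2I_{12}r_1r_2,$$ with $l_i>0$. The set $\mathcal{U}_E^{123}\subset\mathbb{R}^3$ is the set of $(u_1,u_2,u_3)$ for which $l_1,l_2,l_3$ satisfy the strict triangle inequalities. The Jacobian matrix $\left(\partial\alpha_i/\partial u_j\right)$ is symmetric. *)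

(* Defs.v *)
From Stdlib Require Import Reals Lra.
Open Scope R_scope.

(* r_i = e^{u_i} *)
Definition lsq1 (I12 I23 I31 u1 u2 u3 : R) : R :=
  (exp u2)^2 + (exp u3)^2 + 2 * I23 * exp u2 * exp u3.
Definition lsq2 (I12 I23 I31 u1 u2 u3 : R) : R :=
  (exp u3)^2 + (exp u1)^2 + 2 * I31 * exp u3 * exp u1.
Definition lsq3 (I12 I23 I31 u1 u2 u3 : R) : R :=
  (exp u1)^2 + (exp u2)^2 + 2 * I12 * exp u1 * exp u2.

Definition l1 I12 I23 I31 u1 u2 u3 := sqrt (lsq1 I12 I23 I31 u1 u2 u3).
Definition l2 I12 I23 I31 u1 u2 u3 := sqrt (lsq2 I12 I23 I31 u1 u2 u3).
Definition l3 I12 I23 I31 u1 u2 u3 := sqrt (lsq3 I12 I23 I31 u1 u2 u3).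

Definition in_UE (I12 I23 I31 u1 u2 u3 : R) : Prop :=
  let a := l1 I12 I23 I31 u1 u2 u3 in
  let b := l2 I12 I23 I31 u1 u2 u3 in
  let c := l3 I12 I23 I31 u1 u2 u3 in
  0 < a /\ 0 < b /\ 0 < c /\ a < b + c /\ b < c + a /\ c < a + b.

(* inner angle opposite to side a in a Euclidean triangle with sides a b c
   (law of cosines) *)
Definition opp_angle (a b c : R) : R := acos ((b^2 + c^2 - a^2) / (2 * b * c)).

Definition alpha (I12 I23 I31 : R) (i : nat) (u1 u2 u3 : R) : R :=
  let a := l1 I12 I23 I31 u1 u2 u3 in
  let b := l2 I12 I23 I31 u1 u2 u3 in
  let c := l3 I12 I23 I31 u1 u2 u3 in
  match i with
  | 1%nat => opp_angle a b c
  | 2%nat => opp_angle b c a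
  | _ => opp_angle c a b
  end.

Definition alpha_partial_fun (I12 I23 I31 : R) (i j : nat) (u1 u2 u3 : R) : R -> R :=
  fun t => match j with
           | 1%nat => alpha I12 I23 I31 i t u2 u3
           | 2%nat => alpha I12 I23 I31 i u1 t u3
           | _ => alpha I12 I23 I31 i u1 u2 t
           end.

Definition u_coord (j : nat) (u1 u2 u3 : R) : R :=
  match j with 1%nat => u1 | 2%nat => u2 | _ => u3 end.

Definition charpoly3 (J : nat -> nat -> R) (x : R) : R :=
  let a11 := J 1%nat 1%nat - x in let a12 := J 1%nat 2%nat in let a13 := J 1%nat 3%nat in
  let a21 := J 2%nat 1%nat in let a22 := J 2%nat 2%nat - x in let a23 := J 2%nat 3%nat in
  let a31 := J 3%nat 1%nat in let a32 := J 3%nat 2%nat in let a33 := J 3%nat 3%nat - x in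
  a11 * (a22 * a33 - a23 * a32) - a12 * (a21 * a33 - a23 * a31)
  + a13 * (a21 * a32 - a22 * a31).

(* Main.v *)
Require Import Defs.
From Stdlib Require Import Reals.
From Stdlib Require Import Lra Lia.
Open Scope R_scope.

Lemma dpl_eq f x l l' : derivable_pt_lim f x l -> l = l' -> derivable_pt_lim f x l'.
Proof. intros H ->; exact H. Qed.
Lemma dmul f g t lf lg : derivable_pt_lim f t lf -> derivable_pt_lim g t lg ->
  derivable_pt_lim (fun s => f s * g s) t (lf * g t + f t * lg).
Proof. intros; apply (derivable_pt_lim_mult f g); auto. Qed.
Lemma dplus f g t lf lg : derivable_pt_lim f t lf -> derivable_pt_lim g t lg ->
  derivable_pt_lim (fun s => f s + g s) t (lf + lg).
Proof. intros; apply (derivable_pt_lim_plus f g); auto. Qed.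
Lemma dminus f g t lf lg : derivable_pt_lim f t lf -> derivable_pt_lim g t lg ->
  derivable_pt_lim (fun s => f s - g s) t (lf - lg).
Proof. intros; apply (derivable_pt_lim_minus f g); auto. Qed.
Lemma ddiv f g t lf lg : derivable_pt_lim f t lf -> derivable_pt_lim g t lg -> g t <> 0 ->
  derivable_pt_lim (fun s => f s / g s) t ((lf * g t - lg * f t) / (g t)²).
Proof. intros; apply (derivable_pt_lim_div f g); auto. Qed.
Lemma dconst (a t : R) : derivable_pt_lim (fun _ => a) t 0.
Proof. apply derivable_pt_lim_const. Qed.
Lemma did t : derivable_pt_lim (fun s => s) t 1.
Proof. apply derivable_pt_lim_id. Qed.
Lemma dpow2 f t l : derivable_pt_lim f t l -> derivable_pt_lim (fun s => f s ^ 2) t (2 * f t * l).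
Proof. intros H. eapply dpl_eq.
  apply (derivable_pt_lim_comp f (fun y => y^2)); [exact H| apply derivable_pt_lim_pow].
  simpl; ring. Qed.
Lemma dsqrt f t l : derivable_pt_lim f t l -> 0 < f t ->
  derivable_pt_lim (fun s => sqrt (f s)) t (l / (2 * sqrt (f t))).
Proof. intros H Hp. eapply dpl_eq.
  apply (derivable_pt_lim_comp f sqrt); [exact H| apply derivable_pt_lim_sqrt; exact Hp].
  field. apply Rgt_not_eq, sqrt_lt_R0; exact Hp. Qed.
Lemma dexp f t l : derivable_pt_lim f t l -> derivable_pt_lim (fun s => exp (f s)) t (exp (f t) * l).
Proof. intros H. eapply dpl_eq.
  apply (derivable_pt_lim_comp f exp); [exact H| apply derivable_pt_lim_exp]. ring. Qed.
Lemma dacos f t l : derivable_pt_lim f t l -> -1 < f t < 1 ->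
  derivable_pt_lim (fun s => acos (f s)) t (-1 / sqrt (1 - (f t)²) * l).
Proof. intros H Hr.
  apply (derivable_pt_lim_comp f acos); [exact H|].
  apply (derive_pt_eq_1 _ _ _ (derivable_pt_acos _ Hr)). apply derive_pt_acos. Qed.

Definition D16 X Y Z := 2*X*Y + 2*Y*Z + 2*Z*X - X^2 - Y^2 - Z^2.
Definition Ngen X Y Z X' Y' Z' := X' - Y' - Z' + (Y + Z - X) * (Y'/(2*Y) + Z'/(2*Z)).

Lemma deriv_opp (X Y Z : R -> R) (t X' Y' Z' : R) :
 derivable_pt_lim X t X' -> derivable_pt_lim Y t Y' -> derivable_pt_lim Z t Z' ->
 0 < X t -> 0 < Y t -> 0 < Z t -> 0 < D16 (X t) (Y t) (Z t) ->
 derivable_pt_lim (fun s => opp_angle (sqrt (X s)) (sqrt (Y s)) (sqrt (Z s))) t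
   (Ngen (X t) (Y t) (Z t) X' Y' Z' / sqrt (D16 (X t) (Y t) (Z t))).
Proof.
  intros dX dY dZ HX HY HZ HD. unfold Ngen.
  pose proof (sqrt_lt_R0 _ HX) as Ha.
  pose proof (sqrt_lt_R0 _ HY) as Hb.
  pose proof (sqrt_lt_R0 _ HZ) as Hc.
  pose proof (sqrt_lt_R0 _ HD) as HS.
  assert (EX : X t = sqrt (X t) ^ 2) by (simpl; rewrite Rmult_1_r, sqrt_sqrt; lra).
  assert (EY : Y t = sqrt (Y t) ^ 2) by (simpl; rewrite Rmult_1_r, sqrt_sqrt; lra).
  assert (EZ : Z t = sqrt (Z t) ^ 2) by (simpl; rewrite Rmult_1_r, sqrt_sqrt; lra).
  unfold opp_angle.
  set (g := fun s => (sqrt (Y s) ^ 2 + sqrt (Z s) ^ 2 - sqrt (X s) ^ 2) / (2 * sqrt (Y s) * sqrt (Z s))).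
  assert (Hg1 : 1 - (g t)² = (sqrt (D16 (X t) (Y t) (Z t)) / (2 * sqrt (Y t) * sqrt (Z t)))²).
  { unfold g, Rsqr.
    replace (sqrt (D16 (X t) (Y t) (Z t)) / (2 * sqrt (Y t) * sqrt (Z t)) *
      (sqrt (D16 (X t) (Y t) (Z t)) / (2 * sqrt (Y t) * sqrt (Z t))))
      with (sqrt (D16 (X t) (Y t) (Z t)) * sqrt (D16 (X t) (Y t) (Z t)) / (2 * sqrt (Y t) * sqrt (Z t))^2)
      by (field; lra).
    rewrite sqrt_sqrt by lra. unfold D16.
    remember (sqrt (X t)) as a. remember (sqrt (Y t)) as b. remember (sqrt (Z t)) as c.
    rewrite EX, EY, EZ. field. lra. }
  assert (Hrange : -1 < g t < 1).
  { assert (0 < 1 - (g t)²). { rewrite Hg1. apply Rlt_0_sqr. apply Rgt_not_eq.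
      apply Rdiv_lt_0_compat; [lra| apply Rmult_lt_0_compat; [lra|lra]]. }
    unfold Rsqr in H. nra. }
  assert (Hsq : sqrt (1 - (g t)²) = sqrt (D16 (X t) (Y t) (Z t)) / (2 * sqrt (Y t) * sqrt (Z t))).
  { rewrite Hg1. apply sqrt_Rsqr. apply Rlt_le, Rdiv_lt_0_compat; [lra| nra]. }
  eapply dpl_eq.
  { apply (dacos g); [| exact Hrange].
    unfold g. apply ddiv.
    - apply dminus; [apply dplus|]; apply dpow2; apply dsqrt; eauto.
    - apply dmul; [apply dmul|]; [apply dconst| |]; apply dsqrt; eauto.
    - nra. }
  rewrite Hsq. unfold g.
  remember (sqrt (X t)) as a. remember (sqrt (Y t)) as b. remember (sqrt (Z t)) as c.
  remember (sqrt (D16 (X t) (Y t) (Z t))) as S.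
  rewrite EX, EY, EZ. unfold Rsqr. field. repeat split; lra.
Qed.

(* derivative values of the squared lengths *)
Definition dvr (I12 I23 I31 r1 r2 r3 : R) (k j : nat) : R :=
  match k, j with
  | 1%nat, 2%nat => 2*(r2^2 + I23*r2*r3)
  | 1%nat, 3%nat => 2*(r3^2 + I23*r2*r3)
  | 2%nat, 1%nat => 2*(r1^2 + I31*r3*r1)
  | 2%nat, 3%nat => 2*(r3^2 + I31*r3*r1)
  | 3%nat, 1%nat => 2*(r1^2 + I12*r1*r2)
  | 3%nat, 2%nat => 2*(r2^2 + I12*r1*r2)
  | _, _ => 0
  end.

Definition Xr (I23 r2 r3 : R) := r2^2 + r3^2 + 2*I23*r2*r3.
Definition Yr (I31 r3 r1 : R) := r3^2 + r1^2 + 2*I31*r3*r1.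
Definition Zr (I12 r1 r2 : R) := r1^2 + r2^2 + 2*I12*r1*r2.

Definition Jr (I12 I23 I31 r1 r2 r3 : R) (i j : nat) : R :=
  let X := Xr I23 r2 r3 in let Y := Yr I31 r3 r1 in let Z := Zr I12 r1 r2 in
  let dX := dvr I12 I23 I31 r1 r2 r3 1 j in
  let dY := dvr I12 I23 I31 r1 r2 r3 2 j in
  let dZ := dvr I12 I23 I31 r1 r2 r3 3 j in
  match i with
  | 1%nat => Ngen X Y Z dX dY dZ / sqrt (D16 X Y Z)
  | 2%nat => Ngen Y Z X dY dZ dX / sqrt (D16 Y Z X)
  | _ => Ngen Z X Y dZ dX dY / sqrt (D16 Z X Y)
  end.

Lemma final_alg (J : nat -> nat -> R) p q w :
  J 1%nat 2%nat = p -> J 2%nat 1%nat = p -> J 1%nat 3%nat = q -> J 3%nat 1%nat = q ->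
  J 2%nat 3%nat = w -> J 3%nat 2%nat = w ->
  J 1%nat 1%nat = -(p+q) -> J 2%nat 2%nat = -(p+w) -> J 3%nat 3%nat = -(q+w) ->
  0 < p*q + q*w + p*w ->
  (J 1%nat 1%nat < 0 \/ J 2%nat 2%nat < 0 \/ J 3%nat 3%nat < 0) ->
  exists lam2 lam3 : R, lam2 < 0 /\ lam3 < 0 /\
       forall x : R, charpoly3 J x = - x * (x - lam2) * (x - lam3).
Proof.
  intros H12 H21 H13 H31 H23 H32 H11 H22 H33 He Hd.
  assert (Hs : 0 < p + q + w).
  { rewrite H11, H22, H33 in Hd. apply Rnot_le_lt; intro Hc.
    destruct Hd as [Hd|[Hd|Hd]].
    - assert ((p+q+w)*(p+q) <= 0) by nra. assert (p*q+q*w+p*w = p*q + (p+q+w)*(p+q) - (p+q)^2) by ring. assert (0 <= p^2+p*q+q^2) by nra. nra.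
    - assert ((p+q+w)*(p+w) <= 0) by nra. assert (p*q+q*w+p*w = p*w + (p+q+w)*(p+w) - (p+w)^2) by ring. assert (0 <= p^2+p*w+w^2) by nra. nra.
    - assert ((p+q+w)*(q+w) <= 0) by nra. assert (p*q+q*w+p*w = q*w + (p+q+w)*(q+w) - (q+w)^2) by ring. assert (0 <= q^2+q*w+w^2) by nra. nra. }
  set (d := (p+q+w)^2 - 3*(p*q+q*w+p*w)).
  assert (Hd0 : 0 <= d) by (unfold d; pose proof (pow2_ge_0 (p-q)); pose proof (pow2_ge_0 (q-w)); pose proof (pow2_ge_0 (p-w)); nra).
  assert (Hdl : d < (p+q+w)^2) by (unfold d; lra).
  pose proof (sqrt_pos d) as Hsp.
  assert (Hsq : sqrt d * sqrt d = d) by (apply sqrt_sqrt; lra).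
  assert (Hlt : sqrt d < p+q+w).
  { apply Rnot_le_lt; intro Hc. assert ((p+q+w)*(p+q+w) <= sqrt d * sqrt d) by nra. nra. }
  exists (-(p+q+w) + sqrt d), (-(p+q+w) - sqrt d).
  split; [lra| split; [lra|]].
  intro x. unfold charpoly3. rewrite H12,H21,H13,H31,H23,H32,H11,H22,H33.
  replace (- x * (x - (- (p + q + w) + sqrt d)) * (x - (- (p + q + w) - sqrt d)))
    with (- x * ((x + (p+q+w))^2 - sqrt d * sqrt d)) by ring.
  rewrite Hsq. unfold d. ring.
Qed.

Lemma neg_lemma u A Y v B Z S : 0<u->0<A->0<Y->0<v->0<B->0<Z->0<S -> -(u*A/Y+v*B/Z)/S < 0.
Proof.
  intros. assert (0 < (u*A/Y+v*B/Z)/S).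
  { apply Rdiv_lt_0_compat; [|lra]. apply Rplus_lt_0_compat; apply Rdiv_lt_0_compat; nra. }
  unfold Rdiv in *. lra.
Qed.

Lemma D16_p1 X Y Z : D16 Y Z X = D16 X Y Z. Proof. unfold D16; ring. Qed.
Lemma D16_p2 X Y Z : D16 Z X Y = D16 X Y Z. Proof. unfold D16; ring. Qed.

Lemma alg_main I12 I23 I31 r1 r2 r3 :
  0 <= I12 -> 0 <= I23 -> 0 <= I31 -> 0 < r1 -> 0 < r2 -> 0 < r3 ->
  0 < D16 (Xr I23 r2 r3) (Yr I31 r3 r1) (Zr I12 r1 r2) ->
  (forall i : nat, (1 <= i <= 3)%nat ->
       Jr I12 I23 I31 r1 r2 r3 i 1%nat + Jr I12 I23 I31 r1 r2 r3 i 2%nat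
       + Jr I12 I23 I31 r1 r2 r3 i 3%nat = 0) /\
  (exists lam2 lam3 : R, lam2 < 0 /\ lam3 < 0 /\
       forall x : R, charpoly3 (Jr I12 I23 I31 r1 r2 r3) x = - x * (x - lam2) * (x - lam3)).
Proof.
  intros h12 h23 h31 p1 p2 p3 HD.
  set (J := Jr I12 I23 I31 r1 r2 r3).
  assert (HX : 0 < Xr I23 r2 r3) by (unfold Xr; assert (0 < r2*r3) by nra; nra).
  assert (HY : 0 < Yr I31 r3 r1) by (unfold Yr; assert (0 < r3*r1) by nra; nra).
  assert (HZ : 0 < Zr I12 r1 r2) by (unfold Zr; assert (0 < r1*r2) by nra; nra).
  set (S := sqrt (D16 (Xr I23 r2 r3) (Yr I31 r3 r1) (Zr I12 r1 r2))).
  assert (HS : 0 < S) by (apply sqrt_lt_R0; exact HD).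
  assert (HSS : S * S = D16 (Xr I23 r2 r3) (Yr I31 r3 r1) (Zr I12 r1 r2)) by (apply sqrt_sqrt; lra).
  assert (EJ : forall i j, J i j = match i with
    | 1%nat => Ngen (Xr I23 r2 r3) (Yr I31 r3 r1) (Zr I12 r1 r2)
                 (dvr I12 I23 I31 r1 r2 r3 1 j) (dvr I12 I23 I31 r1 r2 r3 2 j) (dvr I12 I23 I31 r1 r2 r3 3 j) / S
    | 2%nat => Ngen (Yr I31 r3 r1) (Zr I12 r1 r2) (Xr I23 r2 r3)
                 (dvr I12 I23 I31 r1 r2 r3 2 j) (dvr I12 I23 I31 r1 r2 r3 3 j) (dvr I12 I23 I31 r1 r2 r3 1 j) / S
    | _ => Ngen (Zr I12 r1 r2) (Xr I23 r2 r3) (Yr I31 r3 r1)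
                 (dvr I12 I23 I31 r1 r2 r3 3 j) (dvr I12 I23 I31 r1 r2 r3 1 j) (dvr I12 I23 I31 r1 r2 r3 2 j) / S
    end).
  { intros i j. unfold J, Jr, S. destruct i as [|[|[|i]]]; try reflexivity;
    first [rewrite (D16_p1 (Xr I23 r2 r3) (Yr I31 r3 r1) (Zr I12 r1 r2)) | rewrite (D16_p2 (Xr I23 r2 r3) (Yr I31 r3 r1) (Zr I12 r1 r2))]; reflexivity. }
  assert (nX : Xr I23 r2 r3 <> 0) by lra.
  assert (nY : Yr I31 r3 r1 <> 0) by lra.
  assert (nZ : Zr I12 r1 r2 <> 0) by lra.
  assert (nS : S <> 0) by lra.
  clearbody S.
  assert (R1 : J 1%nat 1%nat + J 1%nat 2%nat + J 1%nat 3%nat = 0).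
  { rewrite !EJ. unfold Ngen, dvr. unfold Xr, Yr, Zr in *. field; auto. }
  assert (R2 : J 2%nat 1%nat + J 2%nat 2%nat + J 2%nat 3%nat = 0).
  { rewrite !EJ. unfold Ngen, dvr. unfold Xr, Yr, Zr in *. field; auto. }
  assert (R3 : J 3%nat 1%nat + J 3%nat 2%nat + J 3%nat 3%nat = 0).
  { rewrite !EJ. unfold Ngen, dvr. unfold Xr, Yr, Zr in *. field; auto. }
  split.
  { intros i Hi. destruct i as [|[|[|[|i]]]]; try lia; assumption. }
  assert (S12 : J 1%nat 2%nat = J 2%nat 1%nat).
  { rewrite !EJ. unfold Ngen, dvr. unfold Xr, Yr, Zr in *. field; auto. }
  assert (S13 : J 1%nat 3%nat = J 3%nat 1%nat).
  { rewrite !EJ. unfold Ngen, dvr. unfold Xr, Yr, Zr in *. field; auto. }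
  assert (S23 : J 2%nat 3%nat = J 3%nat 2%nat).
  { rewrite !EJ. unfold Ngen, dvr. unfold Xr, Yr, Zr in *. field; auto. }
  set (T := (r2^2 + I23*r2*r3)*(r3^2 + I31*r3*r1)*(r1^2 + I12*r1*r2)
          + (r3^2 + I23*r2*r3)*(r1^2 + I31*r3*r1)*(r2^2 + I12*r1*r2)).
  assert (HT : 0 < T).
  { unfold T. assert (0 < r2*r3) by nra. assert (0 < r3*r1) by nra. assert (0 < r1*r2) by nra.
    assert (0 < r2^2 + I23*r2*r3) by nra. assert (0 < r3^2 + I31*r3*r1) by nra.
    assert (0 < r1^2 + I12*r1*r2) by nra. assert (0 < r3^2 + I23*r2*r3) by nra.
    assert (0 < r1^2 + I31*r3*r1) by nra. assert (0 < r2^2 + I12*r1*r2) by nra.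
    apply Rplus_lt_0_compat; repeat apply Rmult_lt_0_compat; assumption. }
  assert (Det : J 1%nat 1%nat * J 2%nat 2%nat - J 1%nat 2%nat * J 2%nat 1%nat
     = T / (Xr I23 r2 r3 * Yr I31 r3 r1 * Zr I12 r1 r2)).
  { rewrite !EJ.
    replace (T / (Xr I23 r2 r3 * Yr I31 r3 r1 * Zr I12 r1 r2)) with
      (D16 (Xr I23 r2 r3) (Yr I31 r3 r1) (Zr I12 r1 r2) * T / (Xr I23 r2 r3 * Yr I31 r3 r1 * Zr I12 r1 r2) / (S*S))
      by (rewrite HSS; field; repeat split; auto; lra).
    unfold T, D16, Ngen, dvr. unfold Xr, Yr, Zr in *. field; auto. }
  assert (Hpos : 0 < T / (Xr I23 r2 r3 * Yr I31 r3 r1 * Zr I12 r1 r2)).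
  { apply Rdiv_lt_0_compat; [exact HT|]. repeat apply Rmult_lt_0_compat; assumption. }
  set (A1 := Yr I31 r3 r1 + Zr I12 r1 r2 - Xr I23 r2 r3).
  set (A2 := Zr I12 r1 r2 + Xr I23 r2 r3 - Yr I31 r3 r1).
  set (A3 := Xr I23 r2 r3 + Yr I31 r3 r1 - Zr I12 r1 r2).
  assert (D1 : J 1%nat 1%nat = -((r1^2 + I31*r3*r1)*A3/Yr I31 r3 r1 + (r1^2 + I12*r1*r2)*A2/Zr I12 r1 r2)/S).
  { rewrite EJ. unfold A2, A3, Ngen, dvr. unfold Xr, Yr, Zr in *. field; auto. }
  assert (D2 : J 2%nat 2%nat = -((r2^2 + I12*r1*r2)*A1/Zr I12 r1 r2 + (r2^2 + I23*r2*r3)*A3/Xr I23 r2 r3)/S).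
  { rewrite EJ. unfold A1, A3, Ngen, dvr. unfold Xr, Yr, Zr in *. field; auto. }
  assert (D3 : J 3%nat 3%nat = -((r3^2 + I23*r2*r3)*A2/Xr I23 r2 r3 + (r3^2 + I31*r3*r1)*A1/Yr I31 r3 r1)/S).
  { rewrite EJ. unfold A1, A2, Ngen, dvr. unfold Xr, Yr, Zr in *. field; auto. }
  assert (Hd : J 1%nat 1%nat < 0 \/ J 2%nat 2%nat < 0 \/ J 3%nat 3%nat < 0).
  { assert (0 < r2*r3) by nra. assert (0 < r3*r1) by nra. assert (0 < r1*r2) by nra.
    destruct (Rlt_or_le 0 A1), (Rlt_or_le 0 A2), (Rlt_or_le 0 A3);
      try (unfold A1, A2, A3 in *; lra).
    all: first [ left; rewrite D1; apply neg_lemma; auto; nra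
               | right; left; rewrite D2; apply neg_lemma; auto; nra
               | right; right; rewrite D3; apply neg_lemma; auto; nra ]. }
  apply (final_alg J (J 1%nat 2%nat) (J 1%nat 3%nat) (J 2%nat 3%nat)); auto; try lra.
  assert (E11 : J 1%nat 1%nat = -(J 1%nat 2%nat + J 1%nat 3%nat)) by lra.
  assert (E22 : J 2%nat 2%nat = -(J 1%nat 2%nat + J 2%nat 3%nat)) by lra.
  rewrite E11, E22, <- S12 in Det. 
  replace (J 1%nat 2%nat * J 1%nat 3%nat + J 1%nat 3%nat * J 2%nat 3%nat + J 1%nat 2%nat * J 2%nat 3%nat)
    with (- (J 1%nat 2%nat + J 1%nat 3%nat) * - (J 1%nat 2%nat + J 2%nat 3%nat) - J 1%nat 2%nat * J 1%nat 2%nat) by ring.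
  lra.
Qed.

Lemma D16_sides a b c : 0 < a -> 0 < b -> 0 < c -> a < b + c -> b < c + a -> c < a + b ->
  0 < D16 (a^2) (b^2) (c^2).
Proof.
  intros. replace (D16 (a^2) (b^2) (c^2)) with ((a+b+c)*((b+c-a)*((c+a-b)*(a+b-c))))
    by (unfold D16; ring).
  repeat apply Rmult_lt_0_compat; lra.
Qed.

Definition upd1 (j : nat) (t u1 : R) := match j with 1%nat => t | _ => u1 end.
Definition upd2 (j : nat) (t u2 : R) := match j with 2%nat => t | _ => u2 end.
Definition upd3 (j : nat) (t u3 : R) := match j with 1%nat | 2%nat => u3 | _ => t end.
Definition Lf (I12 I23 I31 u1 u2 u3 : R) (k j : nat) : R -> R := fun t =>
  match k with
  | 1%nat => lsq1 I12 I23 I31 (upd1 j t u1) (upd2 j t u2) (upd3 j t u3)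
  | 2%nat => lsq2 I12 I23 I31 (upd1 j t u1) (upd2 j t u2) (upd3 j t u3)
  | _ => lsq3 I12 I23 I31 (upd1 j t u1) (upd2 j t u2) (upd3 j t u3)
  end.

Ltac dtac := repeat first [apply dconst | apply dplus | apply dpow2 | apply dmul | apply dexp | apply did].

Ltac dlsq := cbv beta iota delta [Lf upd1 upd2 upd3 lsq1 lsq2 lsq3 u_coord];
  eapply dpl_eq; [dtac | cbv beta iota delta [dvr]; ring].

Theorem lemma2p4 (I12 I23 I31 : R)
  (h12 : 0 <= I12) (h23 : 0 <= I23) (h31 : 0 <= I31)
  (u1 u2 u3 : R) (hU : in_UE I12 I23 I31 u1 u2 u3) :
  exists J : nat -> nat -> R,
    (* J is the Jacobian (d alpha_i / d u_j)_{i,j=1..3} at (u1,u2,u3) *)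
    (forall i j : nat, (1 <= i <= 3)%nat -> (1 <= j <= 3)%nat ->
       derivable_pt_lim (alpha_partial_fun I12 I23 I31 i j u1 u2 u3)
                        (u_coord j u1 u2 u3) (J i j)) /\
    (* (1,1,1) is an eigenvector with eigenvalue 0 *)
    (forall i : nat, (1 <= i <= 3)%nat ->
       J i 1%nat + J i 2%nat + J i 3%nat = 0) /\
    (* the eigenvalues (with multiplicity) are 0, l2, l3 with l2, l3 < 0 *)
    (exists lam2 lam3 : R, lam2 < 0 /\ lam3 < 0 /\
       forall x : R, charpoly3 J x = - x * (x - lam2) * (x - lam3)).
Proof.
  destruct hU as (Ha & Hb & Hc & T1 & T2 & T3).
  pose proof (exp_pos u1) as p1. pose proof (exp_pos u2) as p2. pose proof (exp_pos u3) as p3.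
  assert (HX : 0 < Xr I23 (exp u2) (exp u3)) by (unfold Xr; assert (0 < exp u2 * exp u3) by nra; nra).
  assert (HY : 0 < Yr I31 (exp u3) (exp u1)) by (unfold Yr; assert (0 < exp u3 * exp u1) by nra; nra).
  assert (HZ : 0 < Zr I12 (exp u1) (exp u2)) by (unfold Zr; assert (0 < exp u1 * exp u2) by nra; nra).
  assert (HD : 0 < D16 (Xr I23 (exp u2) (exp u3)) (Yr I31 (exp u3) (exp u1)) (Zr I12 (exp u1) (exp u2))).
  { unfold l1, l2, l3 in *.
    rewrite <- (pow2_sqrt (Xr I23 (exp u2) (exp u3))) by lra.
    rewrite <- (pow2_sqrt (Yr I31 (exp u3) (exp u1))) by lra.
    rewrite <- (pow2_sqrt (Zr I12 (exp u1) (exp u2))) by lra.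
    apply D16_sides; assumption. }
  assert (HD1 := HD). rewrite <- D16_p1 in HD1.
  assert (HD2 := HD). rewrite <- D16_p2 in HD2.
  destruct (alg_main I12 I23 I31 (exp u1) (exp u2) (exp u3) h12 h23 h31 p1 p2 p3 HD) as [Hrow Hchar].
  exists (Jr I12 I23 I31 (exp u1) (exp u2) (exp u3)).
  split; [| split; assumption].
  intros i j Hi Hj.
  destruct i as [|[|[|[|i]]]]; try lia; destruct j as [|[|[|[|j]]]]; try lia;
  match goal with |- derivable_pt_lim (alpha_partial_fun _ _ _ ?ii ?jj _ _ _) _ _ =>
    let k1 := match ii with 1%nat => constr:(1%nat) | 2%nat => constr:(2%nat) | _ => constr:(3%nat) end in
    let k2 := match ii with 1%nat => constr:(2%nat) | 2%nat => constr:(3%nat) | _ => constr:(1%nat) end in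
    let k3 := match ii with 1%nat => constr:(3%nat) | 2%nat => constr:(1%nat) | _ => constr:(2%nat) end in
    eapply dpl_eq;
    [ apply (deriv_opp (Lf I12 I23 I31 u1 u2 u3 k1 jj) (Lf I12 I23 I31 u1 u2 u3 k2 jj)
                       (Lf I12 I23 I31 u1 u2 u3 k3 jj) _
                       (dvr I12 I23 I31 (exp u1) (exp u2) (exp u3) k1 jj)
                       (dvr I12 I23 I31 (exp u1) (exp u2) (exp u3) k2 jj)
                       (dvr I12 I23 I31 (exp u1) (exp u2) (exp u3) k3 jj));
      [ dlsq | dlsq | dlsq | first [exact HX | exact HY | exact HZ]
      | first [exact HX | exact HY | exact HZ] | first [exact HX | exact HY | exact HZ]
      | first [exact HD | exact HD1 | exact HD2] ]
    | reflexivity ]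
  end.
Qed.
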